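(* Let $\Lambda_{[m!]}=\{\{1,2,\dots,m!\}:m\in\mathbb N\}\subseteq\mathcal P_{fin}(\mathbb N)$, let $I$ be a fine ideal of $\mathfrak F(\mathcal P_{fin}(\mathbb N),\mathbb R)$ containing $I_{0,\Lambda_{[m!]}}$, and let $P$ be the probability of the NAP-space produced by $(\mathbb N,1,I)$. Then for every $k\in\mathbb N$ and every $l\in\{0,1,\dots,k-1\}$, the set $\mathbb N_{k,l}=\{nk-l:n\in\mathbb N\}$ satisfies $P(\mathbb N_{k,l})=1/k$ exactly. In particular $P(\{k,2k,3k,\dots\})=1/k$.
   Context: $\mathbb N=\{1,2,3,\dots\}$. $\mathcal P_{fin}(\Omega)$ is the set of finite subsets of $\Omega$ and $\mathfrak F=\mathfrak F(\mathcal P_{fin}(\Omega),\mathbb R)$ the real algebra of functions $\mathcal P_{fin}(\Omega)\to\mathbb R$ with pointwise operations. For $\omega\in\Omega$, $\chi_\lambda(\omega)=1$ if $\omega\in\lambda$, else $0$. An ideal $I$ of $\mathfrak F$ is fine if it is maximal and $\lambda\mapsto 1-\chi_\lambda(\omega)$ lies in $I$ for every $\omega\in\Omega$. For $\Lambda\subseteq\mathcal P_{fin}(\Omega)$, $I_{0,\Lambda}=\{\varphi\in\mathfrak F:\varphi(\lambda)=0\text{ for all }\lambda\in\Lambda\}$. The NAP-space produced by $(\Omega,w,I)$ ($w:\Omega\to\mathbb R^+$, $I$ fine) has range field $\mathfrak F/I$, $J$ the canonical projection $\varphi\mapsto\varphi+I$, and $P(A)=J\big(\lambda\mapsto\sum_{\omega\in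 A\cap\lambda}w(\omega)\big)/J\big(\lambda\mapsto\sum_{\omega\in\lambda}w(\omega)\big)$. *)

(* Defs.v *)
From mathcomp Require Import all_boot.
From Stdlib Require Import Reals ClassicalEpsilon.

Set Implicit Arguments.
Unset Strict Implicit.
Unset Printing Implicit Defensive.

(* Omega = N = {1,2,3,...}, represented by the positive elements of nat. *)

(* A finite subset of N is represented canonically by the strictly
   increasing list of its elements (all positive).  Two such lists are
   equal iff they denote the same set, so Pfin is exactly P_fin(N). *)
Definition is_pfin (s : seq nat) : bool :=
  sorted ltn s && all (fun n => (0 < n)%N) s.

Definition Pfin : Type := {s : seq nat | is_pfin s}.

Definition FF : Type := Pfin -> R.

Definition fconst (c : R) : FF := fun _ => c.
Definition fadd (f g : FF) : FF := fun x => (f x + g x)%R.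
Definition fmul (f g : FF) : FF := fun x => (f x * g x)%R.

Definition chi (lam : Pfin) (w : nat) : R :=
  if w \in sval lam then 1%R else 0%R.

Definition is_ideal (I : FF -> Prop) : Prop :=
  I (fconst 0) /\
  (forall f g, I f -> I g -> I (fadd f g)) /\
  (forall f g, I g -> I (fmul f g)).

Definition maximal_ideal (I : FF -> Prop) : Prop :=
  is_ideal I /\ ~ I (fconst 1) /\
  forall J : FF -> Prop, is_ideal J -> (forall f, I f -> J f) ->
    (forall f, J f -> I f) \/ J (fconst 1).

Definition fine (I : FF -> Prop) : Prop :=
  maximal_ideal I /\
  forall w : nat, (0 < w)%N -> I (fun lam => (1 - chi lam w)%R).

Definition I0 (Lam : Pfin -> Prop) : FF -> Prop :=
  fun phi => forall lam, Lam lam -> phi lam = 0%R.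

Definition Lam_fact : Pfin -> Prop :=
  fun lam => exists m : nat, (0 < m)%N /\ sval lam = iota 1 (m `!).

Definition wsum (w : nat -> R) (A : nat -> Prop) : FF :=
  fun lam => foldr (fun x acc =>
                      ((if excluded_middle_informative (A x) then w x else 0)
                       + acc)%R) 0%R (sval lam).

(* "P(A) = c" in the NAP-space produced by (N, w, I), for c a real number
   (embedded in F/I as J of the constant function c).
   P(A) = J(num_A) / J(den) where den = wsum w N.  This says: J(den) is
   nonzero (so the quotient is defined) and J(num_A) = J(c) * J(den),
   i.e. num_A - c * den lies in I. *)
Definition NAP_P_eq (I : FF -> Prop) (w : nat -> R) (A : nat -> Prop) (c : R)
  : Prop :=
  let den := wsum w (fun n => (0 < n)%N) in
  ~ I den /\ I (fun lam => (wsum w A lam - c * den lam)%R).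

Definition Nkl (k l : nat) : nat -> Prop :=
  fun x => exists n : nat, (0 < n)%N /\ x = (n * k - l)%N.

(* Main.v *)
Require Import Defs.
From mathcomp Require Import all_boot.
From Stdlib Require Import Reals ClassicalEpsilon FunctionalExtensionality Lra.
From mathcomp Require Import zify.

Lemma foldr_count (A : nat -> Prop) (p : pred nat) (s : seq nat) :
  (forall x, A x <-> p x) ->
  foldr (fun x acc => ((if excluded_middle_informative (A x) then 1%R else 0%R) + acc)%R) 0%R s
  = INR (count p s).
Proof.
move=> HA; elim: s => [|x s IH] //.
rewrite [foldr _ _ _]/= IH; case: excluded_middle_informative => Ax; case Hp: (p x).
- have -> : count p (x :: s) = (count p s).+1 by rewrite /= Hp.
  rewrite S_INR /=; lra.
- by have := proj1 (HA x) Ax; rewrite Hp.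
- by have := proj2 (HA x); rewrite Hp => /(_ isT).
- have -> : count p (x :: s) = (count p s) by rewrite /= Hp.
  rewrite /=; lra.
Qed.

Definition pk (k l : nat) : pred nat := fun x => (0 < x) && (k %| x + l).

Lemma Nkl_pk k l x : (0 < k)%N -> (l < k)%N -> Nkl k l x <-> pk k l x.
Proof.
move=> k0 lk; split.
- move=> [n [n0 ->]]; rewrite /pk; apply/andP; split.
  + have : (k <= n * k)%N by rewrite leq_pmull. lia.
  + have -> : (n * k - l + l = n * k)%N.
      have : (k <= n * k)%N by rewrite leq_pmull. lia.
    exact: dvdn_mull.
- move=> /andP [x0 /dvdnP [n hn]]; exists n; split; last lia.
  case: n hn => //= hn; lia.
Qed.

Lemma count_block k l : (0 < k)%N -> (l < k)%N -> count (pk k l) (iota 1 k) = 1%N.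
Proof.
move=> k0 lk.
rewrite (@eq_in_count _ _ (pred1 (k - l))).
  by rewrite count_uniq_mem ?iota_uniq // mem_iota; apply/eqP; lia.
move=> x; rewrite mem_iota => /andP [x1 xk] /=; rewrite /pk.
apply/idP/idP.
- move=> /andP [_ /dvdnP [c hc]]; apply/eqP.
  case: c hc => [|[|c]] hc; lia.
- move=> /eqP ->; apply/andP; split; first lia.
  by have -> : (k - l + l = k)%N by lia.
Qed.

Lemma count_mult k l q : (0 < k)%N -> (l < k)%N -> count (pk k l) (iota 1 (q * k)) = q.
Proof.
move=> k0 lk; elim: q => [|q IH]; first by rewrite mul0n.
rewrite mulSn addnC iotaD count_cat IH.
rewrite -[(1 + q * k)%N]addnC iotaDl count_map.
rewrite (@eq_in_count _ _ (pk k l)) ?count_block ?addn1 //.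
move=> x; rewrite mem_iota => /andP [x1 _] /=; rewrite /pk.
have -> : (q * k + x + l = q * k + (x + l))%N by lia.
rewrite dvdn_addr ?dvdn_mull //.
have -> : (0 < q * k + x)%N by lia.
by rewrite x1.
Qed.

Lemma wsum_count (A : nat -> Prop) (p : pred nat) lam :
  (forall x, A x <-> p x) -> wsum (fun _ => 1%R) A lam = INR (count p (sval lam)).
Proof. move=> H; exact: foldr_count. Qed.

Theorem mainTheorem13 (I : FF -> Prop) :
  fine I ->
  (forall phi, I0 Lam_fact phi -> I phi) ->
  forall k l : nat, (0 < k)%N -> (l < k)%N ->
    NAP_P_eq I (fun _ => 1%R) (Nkl k l) (1 / INR k)%R.
Proof.
move=> [[[I0z [Iadd Imul]] [I1 _]] Ichi] HI0 k l k0 lk.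
have Hden : forall lam, wsum (fun _ => 1%R) (fun n => (0 < n)%N) lam
                       = INR (count (fun n => 0 < n)%N (sval lam)).
  move=> lam; apply: wsum_count => x; split => //.
split.
- move=> Iden.
  set f := fadd (wsum (fun _ => 1%R) (fun n => (0 < n)%N)) (fun lam => (1 - chi lam 1)%R).
  have If : I f by apply: Iadd => //; exact: Ichi.
  have fpos : forall lam, (0 < f lam)%R.
    move=> lam; rewrite /f /fadd Hden /chi.
    case: ifP => h1.
    + have : (0 < count (fun n => 0 < n)%N (sval lam))%N.
        by rewrite -has_count; apply/hasP; exists 1%N.
      move=> /ltP /lt_INR; rewrite /= => h; lra.
    + have := pos_INR (count (fun n => 0 < n)%N (sval lam)); lra.
  apply: I1.
  have -> : fconst 1 = fmul (fun lam => / f lam)%R f.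
    apply: functional_extensionality => lam; rewrite /fconst /fmul.
    have := fpos lam => h; field; lra.
  exact: Imul.
- set phi := (fun lam => _).
  set w := ((k`!) + 1)%N.
  have Ih : I (fmul phi (fun lam => (1 - chi lam w)%R)) by apply: Imul; apply: Ichi; lia.
  have Ig : I (fmul phi (fun lam => chi lam w)).
    apply: HI0 => lam [m [m0 hlam]].
    rewrite /fmul /chi hlam mem_iota.
    case: (leqP k m) => km.
    + have [q hq] : exists q, m`! = (q * k)%N.
        by apply/dvdnP; apply: dvdn_fact; apply/andP; split.
      rewrite /phi (@wsum_count (Nkl k l) (pk k l) lam (fun x => @Nkl_pk k l x k0 lk)) Hden hlam.
      rewrite hq count_mult //.
      rewrite (@eq_in_count _ _ predT) ?count_predT ?size_iota.
        rewrite mult_INR.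
        have : INR k <> 0%R by apply: not_0_INR; lia.
        move=> h; field_simplify; lra.
      by move=> x; rewrite mem_iota => /andP [].
    + have : (m`! <= (k.-1)`!)%N by apply: leq_fact; lia.
      have : ((k.-1)`! <= k`!)%N.
        by rewrite -{2}(prednK k0) factS leq_pmull.
      move=> h1 h2.
      have -> : (1 <= w < 1 + m`!)%N = false by rewrite /w; apply/negbTE; lia.
      by rewrite Rmult_0_r.
  have -> : phi = fadd (fmul phi (fun lam => (1 - chi lam w)%R)) (fmul phi (fun lam => chi lam w)).
    apply: functional_extensionality => lam; rewrite /fadd /fmul; ring.
  exact: Iadd.
Qed.
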